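(* Every generalized contingent solution for (MOC) is a generalized proximal solution for (MOC).
   Context: Setting (MOC). Fix $T>0$, $I=[0,T]$, integers $n,m,p\ge1$, nonempty compact $U\subset\mathbb{R}^m$; $f:\mathbb{R}^n\times U\to\mathbb{R}^n$ continuous, bounded, and Lipschitz in $x$ uniformly in $u$; $L:\mathbb{R}^n\times U\to\mathbb{R}^p$ continuous, bounded, and Lipschitz in $x$ uniformly in $u$. Euclidean norms/inner products on $\mathbb{R}^p$ and $\mathbb{R}^{1+n+p}$. $P\subset\mathbb{R}^p$: closed convex pointed cone containing $0$ with nonempty interior. For $W:I\times\mathbb{R}^n\rightrightarrows\mathbb{R}^p$, $W_\uparrow(t,x)=W(t,x)+P$. $W$ is an extremal element map if for all $(t,x)$ and $y\in W(t,x)$: $W(t,x)\cap(y-P)=\{y\}$ and $W(t,x)\cap(y+P)=\{y\}$. $(\mathrm{FL})(x)=\mathrm{cl}\,\mathrm{co}\{(f(x,u),L(x,u)):u\in U\}$. Contingent cone: $T_S(z)=\{v:\exists h_k\to0^+,\exists v_k\to v,z+h_kv_k\in S\}$; contingent derivative $DF(z,y)$ has graph $T_{\mathrm{gph}F}(z,y)$, value at $v$ written $DF((z,y);v)$. Proximal normal cone: $N_S(z)=\{v:\exists M>0,\langle v,\bar z-z\rangle\le M\|\bar z-z\|^2\ \forall\bar z\in S\}$; coderivative $D^*F(z,y)(w^* )=\{v^*:(v^*,-w^* )\in N_{\mathrm{gph}F}(z,y)\}$. Generalized contingent solution: an extremal element map $W$ with (i) for all $(t,x)\in[0,T)\times\mathbb{R}^n$,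 $y\in W(t,x)$, some $(\bar f,\bar L)\in(\mathrm{FL})(x)$ satisfies $-\bar L\in DW_\uparrow((t,x,y);(1,\bar f))$; (ii) for all $(t,x)\in(0,T]\times\mathbb{R}^n$, $y\in W(t,x)$, $(f,L)\in(\mathrm{FL})(x)$: $L\in DW_\uparrow((t,x,y);(-1,-f))$; (iii) $W(T,x)=\{0\}$ for all $x$. Generalized proximal solution: an extremal element map $W$ with (i) for all $(t,x)\in(0,T)\times\mathbb{R}^n$, $y\in W(t,x)$, $w^*\in\mathbb{R}^p$, $(\xi^*,v^* )\in D^*W_\uparrow(t,x,y)(w^* )$: $\xi^*+\inf_{(f,L)\in(\mathrm{FL})(x)}(\langle v^*,f\rangle+\langle w^*,L\rangle)=0$; (ii) for all $x$: $W_\uparrow(0,x)\subset\limsup_{t\to0^+,x'\to x}W_\uparrow(t,x')$ and $W_\uparrow(T,x)\subset\limsup_{t\to T^-,x'\to x}W_\uparrow(t,x')$, where $\limsup$ is the set of limits $y$ of $y_k\in W_\uparrow(t_k,x_k)$ with $(t_k,x_k)\to$ the indicated point; (iii) $W(T,x)=\{0\}$. *)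

(* Defs.v *)
From Stdlib Require Import Reals Lra.
From Stdlib Require Fin.
Open Scope R_scope.

Definition Vec (k : nat) : Type := Fin.t k -> R.

Fixpoint vsum (k : nat) : Vec k -> R :=
  match k return Vec k -> R with
  | O => fun _ => 0
  | S k' => fun v => v Fin.F1 + vsum k' (fun i => v (Fin.FS i))
  end.

Definition vdot {k} (u v : Vec k) : R := vsum k (fun i => u i * v i).
Definition vnorm {k} (v : Vec k) : R := sqrt (vdot v v).
Definition vadd {k} (u v : Vec k) : Vec k := fun i => u i + v i.
Definition vsub {k} (u v : Vec k) : Vec k := fun i => u i - v i.
Definition vopp {k} (u : Vec k) : Vec k := fun i => - u i.
Definition vscal {k} (a : R) (u : Vec k) : Vec k := fun i => a * u i.
Definition vzero {k} : Vec k := fun _ => 0.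

Definition PV (n p : nat) : Type := (Vec n * Vec p)%type.
Definition pvdot {n p} (a b : PV n p) : R := vdot (fst a) (fst b) + vdot (snd a) (snd b).
Definition pvnorm {n p} (a : PV n p) : R := sqrt (pvdot a a).
Definition pvsub {n p} (a b : PV n p) : PV n p := (vsub (fst a) (fst b), vsub (snd a) (snd b)).
Definition pvcomb {n p} (l : R) (a b : PV n p) : PV n p :=
  (vadd (vscal l (fst a)) (vscal (1 - l) (fst b)),
   vadd (vscal l (snd a)) (vscal (1 - l) (snd b))).

Definition convex_pv {n p} (C : PV n p -> Prop) : Prop :=
  forall a b l, C a -> C b -> 0 <= l <= 1 -> C (pvcomb l a b).

Definition conv_hull {n p} (S : PV n p -> Prop) : PV n p -> Prop :=
  fun z => forall C, convex_pv C -> (forall s, S s -> C s) -> C z.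

Definition closure_pv {n p} (S : PV n p -> Prop) : PV n p -> Prop :=
  fun z => forall eps, eps > 0 -> exists s, S s /\ pvnorm (pvsub s z) < eps.

Definition FL {n m p} (f : Vec n -> Vec m -> Vec n) (L : Vec n -> Vec m -> Vec p)
  (U : Vec m -> Prop) (x : Vec n) : PV n p -> Prop :=
  closure_pv (conv_hull (fun z => exists u, U u /\ z = (f x u, L x u))).

Definition Z3 (n p : nat) : Type := (R * Vec n * Vec p)%type.
Definition zt {n p} (z : Z3 n p) : R := fst (fst z).
Definition zx {n p} (z : Z3 n p) : Vec n := snd (fst z).
Definition zy {n p} (z : Z3 n p) : Vec p := snd z.
Definition zdot {n p} (a b : Z3 n p) : R :=
  zt a * zt b + vdot (zx a) (zx b) + vdot (zy a) (zy b).
Definition znorm {n p} (a : Z3 n p) : R := sqrt (zdot a a).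
Definition zsub {n p} (a b : Z3 n p) : Z3 n p :=
  (zt a - zt b, vsub (zx a) (zx b), vsub (zy a) (zy b)).
Definition zaddscal {n p} (a : Z3 n p) (h : R) (b : Z3 n p) : Z3 n p :=
  (zt a + h * zt b, vadd (zx a) (vscal h (zx b)), vadd (zy a) (vscal h (zy b))).

Definition contingent_cone {n p} (S : Z3 n p -> Prop) (z : Z3 n p) (v : Z3 n p) : Prop :=
  exists (h : nat -> R) (vk : nat -> Z3 n p),
    (forall k, 0 < h k) /\ Un_cv h 0 /\
    (forall eps, eps > 0 -> exists N, forall k, (k >= N)%nat -> znorm (zsub (vk k) v) < eps) /\
    (forall k, S (zaddscal z (h k) (vk k))).

Definition proximal_normal {n p} (S : Z3 n p -> Prop) (z : Z3 n p) (v : Z3 n p) : Prop :=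
  exists M, M > 0 /\ forall zb, S zb -> zdot v (zsub zb z) <= M * (znorm (zsub zb z))^2.

Definition SVMap (n p : nat) : Type := R -> Vec n -> Vec p -> Prop.

Definition Wup {n p} (P : Vec p -> Prop) (W : SVMap n p) : SVMap n p :=
  fun t x y => exists w q, W t x w /\ P q /\ y = vadd w q.

Definition gph {n p} (T : R) (F : SVMap n p) : Z3 n p -> Prop :=
  fun z => 0 <= zt z <= T /\ F (zt z) (zx z) (zy z).

Definition cont_deriv {n p} (T : R) (F : SVMap n p) (t : R) (x : Vec n) (y : Vec p)
  (a : R) (v : Vec n) (w : Vec p) : Prop :=
  contingent_cone (gph T F) (t, x, y) (a, v, w).

Definition coderiv {n p} (T : R) (F : SVMap n p) (t : R) (x : Vec n) (y : Vec p)
  (w : Vec p) (xi : R) (v : Vec n) : Prop :=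
  proximal_normal (gph T F) (t, x, y) (xi, v, vopp w).

Definition closed_set {k} (S : Vec k -> Prop) : Prop :=
  forall z, (forall eps, eps > 0 -> exists s, S s /\ vnorm (vsub s z) < eps) -> S z.
Definition bounded_set {k} (S : Vec k -> Prop) : Prop :=
  exists B, forall s, S s -> vnorm s <= B.
(* compact subset of R^m (Heine-Borel) *)
Definition compact_set {k} (S : Vec k -> Prop) : Prop := closed_set S /\ bounded_set S.

Definition MOC_regular {n m q} (U : Vec m -> Prop) (g : Vec n -> Vec m -> Vec q) : Prop :=
  (forall x u, U u -> forall eps, eps > 0 -> exists delta, delta > 0 /\
     forall x' u', U u' -> vnorm (vsub x' x) < delta -> vnorm (vsub u' u) < delta ->
       vnorm (vsub (g x' u') (g x u)) < eps) /\
  (exists B, forall x u, U u -> vnorm (g x u) <= B) /\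
  (exists K, forall x x' u, U u -> vnorm (vsub (g x u) (g x' u)) <= K * vnorm (vsub x x')).

Definition ordering_cone {p} (P : Vec p -> Prop) : Prop :=
  closed_set P /\
  (forall a b, P a -> P b -> P (vadd a b)) /\
  (forall l a, 0 <= l -> P a -> P (vscal l a)) /\
  P vzero /\
  (forall a, P a -> P (vopp a) -> a = vzero) /\
  (exists c r, r > 0 /\ forall z, vnorm (vsub z c) < r -> P z).

Definition extremal_map {n p} (T : R) (P : Vec p -> Prop) (W : SVMap n p) : Prop :=
  forall t x y, 0 <= t <= T -> W t x y ->
    (forall z, (W t x z /\ exists q, P q /\ z = vsub y q) <-> z = y) /\
    (forall z, (W t x z /\ exists q, P q /\ z = vadd y q) <-> z = y).

Definition gen_contingent_solution {n m p} (T : R) (U : Vec m -> Prop)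
  (f : Vec n -> Vec m -> Vec n) (L : Vec n -> Vec m -> Vec p)
  (P : Vec p -> Prop) (W : SVMap n p) : Prop :=
  extremal_map T P W /\
  (forall t x y, 0 <= t < T -> W t x y ->
     exists fb Lb, FL f L U x (fb, Lb) /\ cont_deriv T (Wup P W) t x y 1 fb (vopp Lb)) /\
  (forall t x y, 0 < t <= T -> W t x y ->
     forall fv Lv, FL f L U x (fv, Lv) -> cont_deriv T (Wup P W) t x y (-1) (vopp fv) Lv) /\
  (forall x y, W T x y <-> y = vzero).

Definition in_limsup {n p} (F : SVMap n p) (range : R -> Prop) (t0 : R) (x : Vec n) (y : Vec p) : Prop :=
  exists (tk : nat -> R) (xk : nat -> Vec n) (yk : nat -> Vec p),
    (forall k, range (tk k) /\ F (tk k) (xk k) (yk k)) /\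
    Un_cv tk t0 /\
    (forall eps, eps > 0 -> exists N, forall k, (k >= N)%nat ->
        vnorm (vsub (xk k) x) < eps /\ vnorm (vsub (yk k) y) < eps).

Definition gen_proximal_solution {n m p} (T : R) (U : Vec m -> Prop)
  (f : Vec n -> Vec m -> Vec n) (L : Vec n -> Vec m -> Vec p)
  (P : Vec p -> Prop) (W : SVMap n p) : Prop :=
  extremal_map T P W /\
  (forall t x y, 0 < t < T -> W t x y ->
     forall w xi v, coderiv T (Wup P W) t x y w xi v ->
       (* xi + inf_{(f,L) in FL(x)} (<v,f> + <w,L>) = 0, i.e. the infimum equals -xi *)
       (forall fv Lv, FL f L U x (fv, Lv) -> - xi <= vdot v fv + vdot w Lv) /\
       (forall b, (forall fv Lv, FL f L U x (fv, Lv) -> b <= vdot v fv + vdot w Lv) -> b <= - xi)) /\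
  (forall x y, Wup P W 0 x y -> in_limsup (Wup P W) (fun t => 0 < t <= T) 0 x y) /\
  (forall x y, Wup P W T x y -> in_limsup (Wup P W) (fun t => 0 <= t < T) T x y) /\
  (forall x y, W T x y <-> y = vzero).

(* Main.v *)
Require Import Defs.
From Stdlib Require Import Reals Lra Lia FunctionalExtensionality.
Open Scope R_scope.

Lemma vsum_ext k (f g : Vec k) : (forall i, f i = g i) -> vsum k f = vsum k g.
Proof. induction k; simpl; intros H; auto. rewrite H, (IHk _ (fun i => g (Fin.FS i))); auto. Qed.
Lemma vsum_le k (f g : Vec k) : (forall i, f i <= g i) -> vsum k f <= vsum k g.
Proof. induction k; simpl; intros H; [lra|]. apply Rplus_le_compat; [apply H|]. apply IHk; intros; apply H. Qed.
Lemma vsum_zero k : vsum k (fun _ => 0) = 0.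
Proof. induction k; simpl; auto. rewrite IHk; ring. Qed.
Lemma vsum_scal k c (f : Vec k) : vsum k (fun i => c * f i) = c * vsum k f.
Proof. induction k; simpl; [ring|]. rewrite (IHk (fun i => f (Fin.FS i))); ring. Qed.
Lemma vsum_add k (f g : Vec k) : vsum k (fun i => f i + g i) = vsum k f + vsum k g.
Proof. induction k; simpl; [ring|]. rewrite (IHk (fun i => f (Fin.FS i)) (fun i => g (Fin.FS i))); ring. Qed.

Lemma pt_ineq lam u v : lam > 0 -> 2*(u*v) <= lam*(u*u) + /lam*(v*v).
Proof. intros Hl.
  assert (H0 : 0 <= /lam * ((lam*u - v)*(lam*u-v))).
  { apply Rmult_le_pos. left; apply Rinv_0_lt_compat; lra. pose proof (Rle_0_sqr (lam*u-v)); unfold Rsqr in *; lra. }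
  assert (E: /lam * ((lam*u - v)*(lam*u-v)) = lam*(u*u) + /lam*(v*v) - 2*(u*v)) by (field; lra).
  lra. Qed.

Lemma vdot_nonneg k (u : Vec k) : 0 <= vdot u u.
Proof. unfold vdot. rewrite <- (vsum_zero k). apply vsum_le; intros i; apply Rle_0_sqr. Qed.
Lemma vdot_ineq k lam (u v : Vec k) : lam > 0 -> 2 * vdot u v <= lam * vdot u u + /lam * vdot v v.
Proof. intros Hl. unfold vdot. rewrite <- !vsum_scal, <- vsum_add. apply vsum_le; intros; apply pt_ineq; auto. Qed.
Lemma vdot_split k (u d v : Vec k) : vdot u v = vdot u d + vdot u (vsub v d).
Proof. unfold vdot, vsub. rewrite <- vsum_add. apply vsum_ext; intros; ring. Qed.
Lemma vdot_sq_bound k (v d : Vec k) : vdot v v <= 2 * vdot d d + 2 * vdot (vsub v d) (vsub v d).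
Proof. unfold vdot, vsub. rewrite <- !vsum_scal, <- vsum_add. apply vsum_le; intros i; cbv beta. pose proof (Rle_0_sqr (v i - 2 * d i)); unfold Rsqr in *; nra. Qed.
Lemma vdot_opp_l k (u v : Vec k) : vdot (vopp u) v = - vdot u v.
Proof. unfold vdot, vopp. replace (- vsum k (fun i => u i * v i)) with ((-1) * vsum k (fun i => u i * v i)) by ring.
  rewrite <- vsum_scal. apply vsum_ext; intros; ring. Qed.
Lemma vdot_opp_r k (u v : Vec k) : vdot u (vopp v) = - vdot u v.
Proof. unfold vdot, vopp. replace (- vsum k (fun i => u i * v i)) with ((-1) * vsum k (fun i => u i * v i)) by ring.
  rewrite <- vsum_scal. apply vsum_ext; intros; ring. Qed.
Lemma vdot_scal_l k h (u v : Vec k) : vdot (vscal h u) v = h * vdot u v.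
Proof. unfold vdot, vscal. rewrite <- vsum_scal. apply vsum_ext; intros; ring. Qed.
Lemma vdot_scal_r k h (u v : Vec k) : vdot u (vscal h v) = h * vdot u v.
Proof. unfold vdot, vscal. rewrite <- vsum_scal. apply vsum_ext; intros; ring. Qed.
Lemma vdot_sub_self k (a : Vec k) : vdot (vsub a a) (vsub a a) = 0.
Proof. unfold vdot, vsub. rewrite <- (vsum_zero k). apply vsum_ext; intros; ring. Qed.

Lemma vnorm_lt k (v : Vec k) eps : 0 < eps -> vdot v v < eps * eps -> vnorm v < eps.
Proof. intros He H. unfold vnorm. rewrite <- (sqrt_square eps) by lra.
  apply sqrt_lt_1_alt. split; auto. apply vdot_nonneg. Qed.

Lemma zdot_nonneg n p (a : Z3 n p) : 0 <= zdot a a.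
Proof. unfold zdot. pose proof (vdot_nonneg _ (zx a)). pose proof (vdot_nonneg _ (zy a)). nra. Qed.
Lemma zdot_ineq n p lam (a b : Z3 n p) : lam > 0 -> 2 * zdot a b <= lam * zdot a a + /lam * zdot b b.
Proof. intros Hl. unfold zdot.
  pose proof (vdot_ineq _ lam (zx a) (zx b) Hl). pose proof (vdot_ineq _ lam (zy a) (zy b) Hl).
  pose proof (pt_ineq lam (zt a) (zt b) Hl). nra. Qed.
Lemma zdot_split n p (a d v : Z3 n p) : zdot a v = zdot a d + zdot a (zsub v d).
Proof. unfold zdot, zsub, zt, zx, zy; simpl.
  rewrite (vdot_split _ (snd (fst a)) (snd (fst d))), (vdot_split _ (snd a) (snd d)). ring. Qed.
Lemma zdot_sq_bound n p (v d : Z3 n p) : zdot v v <= 2 * zdot d d + 2 * zdot (zsub v d) (zsub v d).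
Proof. unfold zdot, zsub, zt, zx, zy; simpl.
  pose proof (vdot_sq_bound _ (snd (fst v)) (snd (fst d))). pose proof (vdot_sq_bound _ (snd v) (snd d)).
  pose proof (Rle_0_sqr (fst (fst v) - 2 * fst (fst d))); unfold Rsqr in *. nra. Qed.
Lemma zt_bound n p (a : Z3 n p) : zt a * zt a <= zdot a a.
Proof. unfold zdot. pose proof (vdot_nonneg _ (zx a)). pose proof (vdot_nonneg _ (zy a)). lra. Qed.
Lemma zx_bound n p (a : Z3 n p) : vdot (zx a) (zx a) <= zdot a a.
Proof. unfold zdot. pose proof (vdot_nonneg _ (zy a)). nra. Qed.
Lemma zy_bound n p (a : Z3 n p) : vdot (zy a) (zy a) <= zdot a a.
Proof. unfold zdot. pose proof (vdot_nonneg _ (zx a)). nra. Qed.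
Lemma zsub_addscal n p (z b : Z3 n p) h :
  zsub (zaddscal z h b) z = (h * zt b, vscal h (zx b), vscal h (zy b)).
Proof. unfold zsub, zaddscal, zt, zx, zy; simpl. f_equal; [f_equal|].
  - ring.
  - apply functional_extensionality; intros; unfold vsub, vadd, vscal; ring.
  - apply functional_extensionality; intros; unfold vsub, vadd, vscal; ring. Qed.
Lemma zdot_scal_r n p (a b : Z3 n p) h : zdot a (h * zt b, vscal h (zx b), vscal h (zy b)) = h * zdot a b.
Proof. unfold zdot, zt, zx, zy; simpl. rewrite !vdot_scal_r. ring. Qed.
Lemma zdot_scal_2 n p (b : Z3 n p) h :
  zdot (h * zt b, vscal h (zx b), vscal h (zy b)) (h * zt b, vscal h (zx b), vscal h (zy b)) = h * h * zdot b b.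
Proof. unfold zdot, zt, zx, zy; simpl.
  rewrite !vdot_scal_r, !vdot_scal_l. ring. Qed.
Lemma znorm_sq n p (a : Z3 n p) : znorm a ^ 2 = zdot a a.
Proof. unfold znorm. apply pow2_sqrt, zdot_nonneg. Qed.
Lemma znorm_lt_sq n p (a : Z3 n p) eps : znorm a < eps -> zdot a a < eps * eps.
Proof. intros H. rewrite <- znorm_sq. assert (0 <= znorm a) by (unfold znorm; apply sqrt_pos). nra. Qed.
Lemma vdot_ineq_neg k lam (u v : Vec k) : lam > 0 -> -(lam * vdot u u + /lam * vdot v v) <= 2 * vdot u v.
Proof. intros Hl. pose proof (vdot_ineq k lam (vopp u) v Hl) as H.
  rewrite vdot_opp_l, vdot_opp_l, vdot_opp_r in H. lra. Qed.
Lemma zdot_ineq_neg n p lam (a b : Z3 n p) : lam > 0 -> -(lam * zdot a a + /lam * zdot b b) <= 2 * zdot a b.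
Proof. intros Hl. unfold zdot.
  pose proof (vdot_ineq_neg _ lam (zx a) (zx b) Hl). pose proof (vdot_ineq_neg _ lam (zy a) (zy b) Hl).
  pose proof (pt_ineq lam (- zt a) (zt b) Hl). nra. Qed.

Lemma key n p (S : Z3 n p -> Prop) z nu d :
  proximal_normal S z nu -> contingent_cone S z d -> zdot nu d <= 0.
Proof.
  intros [M [HM Hprox]] [h [vk [Hh [Hcv [Hvk HS]]]]].
  destruct (Rle_or_lt (zdot nu d) 0) as [Hc|Hc]; auto. exfalso.
  set (c := zdot nu d) in *. set (A := zdot nu nu). set (D := zdot d d).
  assert (HA: 0 <= A) by apply zdot_nonneg. assert (HD: 0 <= D) by apply zdot_nonneg.
  set (lam := c / (2*(A+1))).
  assert (Hlam: lam > 0) by (unfold lam; apply Rdiv_lt_0_compat; lra).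
  assert (HlamA : lam * A + lam = c/2) by (unfold lam; field; lra).
  set (eps := Rmin 1 (lam*c/2)).
  assert (He: eps > 0) by (unfold eps; apply Rmin_glb_lt; nra).
  assert (He1 : eps <= 1) by apply Rmin_l.
  assert (He2 : eps <= lam*c/2) by apply Rmin_r.
  destruct (Hvk eps He) as [N1 HN1].
  assert (Hb : c / (2*M*(2*D+2)) > 0) by (apply Rdiv_lt_0_compat; nra).
  destruct (Hcv _ Hb) as [N2 HN2].
  set (k := max N1 N2).
  specialize (HN1 k ltac:(lia)). specialize (HN2 k ltac:(lia)).
  unfold R_dist in HN2. rewrite Rminus_0_r, Rabs_pos_eq in HN2 by (left; apply Hh).
  assert (Hhk := Hh k).
  assert (HE: zdot (zsub (vk k) d) (zsub (vk k) d) < eps*eps) by (apply znorm_lt_sq; exact HN1).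
  set (E := zdot (zsub (vk k) d) (zsub (vk k) d)) in *.
  assert (HE0 : 0 <= E) by apply zdot_nonneg.
  assert (Hee : eps * eps <= lam*c/2) by nra.
  pose proof (zdot_split _ _ nu d (vk k)) as Hsplit.
  pose proof (zdot_ineq_neg _ _ lam nu (zsub (vk k) d) Hlam) as Hi.
  fold A E in Hi.
  assert (HiE : /lam * E < c/2).
  { assert (/lam * E < /lam * (lam*c/2)) by (apply Rmult_lt_compat_l; [apply Rinv_0_lt_compat; lra| lra]).
    replace (/lam * (lam*c/2)) with (c/2) in H by (field; lra). lra. }
  fold c in Hsplit. assert (Hlow : zdot nu (vk k) > c/2) by lra.
  pose proof (Hprox _ (HS k)) as Hp.
  rewrite zsub_addscal, zdot_scal_r, znorm_sq, zdot_scal_2 in Hp.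
  pose proof (zdot_sq_bound _ _ (vk k) d) as Hsq. fold D E in Hsq.
  set (V := zdot (vk k) (vk k)) in *.
  assert (HV0 : 0 <= V) by apply zdot_nonneg.
  assert (Hp2 : zdot nu (vk k) <= M * h k * V).
  { apply Rmult_le_reg_l with (h k); auto. nra. }
  assert (HhM : h k * (2*M*(2*D+2)) < c).
  { apply Rmult_lt_reg_r with (/ (2*M*(2*D+2))). apply Rinv_0_lt_compat; nra.
    rewrite Rmult_assoc, Rinv_r by nra. unfold Rdiv in HN2. lra. }
  assert (M * h k * V <= M * h k * (2*D+2)).
  { assert (eps*eps <= 1) by nra. apply Rmult_le_compat_l. nra. lra. }
  nra.
Qed.

Lemma vec_eq1 k (w v q : Vec k) h : vsub (vadd (vadd w (vscal h v)) q) (vadd w q) = vscal h v.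
Proof. apply functional_extensionality; intros; unfold vsub, vadd, vscal; ring. Qed.
Lemma vec_eq2 k (x v : Vec k) h : vsub (vadd x (vscal h v)) x = vscal h v.
Proof. apply functional_extensionality; intros; unfold vsub, vadd, vscal; ring. Qed.

Lemma zt_zsub n p (a b : Z3 n p) : zt (zsub a b) = zt a - zt b.
Proof. reflexivity. Qed.

Lemma limsup_gen n p (T : R) (P : Vec p -> Prop) (W : SVMap n p) t0 x w q (d : Z3 n p)
  (range : R -> Prop) :
  (forall a b, P a -> P b -> P (vadd a b)) -> P q ->
  zt d * zt d = 1 ->
  (forall tau, 0 <= tau <= T -> zt d * (tau - t0) > 0 -> range tau) ->
  contingent_cone (gph T (Wup P W)) (t0, x, w) d ->
  in_limsup (Wup P W) range t0 x (vadd w q).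
Proof.
  intros Hadd Hq Hd Hr [h [vk [Hh [Hcv [Hvk HS]]]]].
  destruct (Hvk 1 Rlt_0_1) as [N0 HN0].
  set (D := zdot d d). assert (HD : 0 <= D) by apply zdot_nonneg.
  assert (Hfacts : forall k, zt d * zt (vk (k+N0)%nat) > 0 /\ zt (vk (k+N0)%nat) * zt (vk (k+N0)%nat) < 4 /\
                        zdot (vk (k+N0)%nat) (vk (k+N0)%nat) <= 2*D+2).
  { intros k. specialize (HN0 (k+N0)%nat ltac:(lia)).
    pose proof (znorm_lt_sq _ _ _ _ HN0) as HE. rewrite Rmult_1_l in HE.
    pose proof (zt_bound _ _ (zsub (vk (k+N0)%nat) d)) as Ht.
    rewrite zt_zsub in Ht.
    pose proof (zdot_sq_bound _ _ (vk (k+N0)%nat) d) as Hs. fold D in Hs.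
    split; [|split]; nra. }
  exists (fun k => t0 + h (k+N0)%nat * zt (vk (k+N0)%nat)),
         (fun k => vadd x (vscal (h (k+N0)%nat) (zx (vk (k+N0)%nat)))),
         (fun k => vadd (vadd w (vscal (h (k+N0)%nat) (zy (vk (k+N0)%nat)))) q).
  split; [|split].
  - intros k. destruct (Hfacts k) as [Hf1 _]. pose proof (Hh (k+N0)%nat) as Hhk.
    destruct (HS (k+N0)%nat) as [Hrange HW]. unfold zaddscal, zt, zx, zy in Hrange, HW; simpl in Hrange, HW.
    fold (zt (vk (k+N0)%nat)) (zx (vk (k+N0)%nat)) (zy (vk (k+N0)%nat)) in Hrange, HW.
    split.
    + apply Hr; auto. nra.
    + destruct HW as [w' [q' [HW' [Hq' E]]]]. exists w', (vadd q' q). split; [exact HW'|split].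
      * apply Hadd; auto.
      * rewrite E. apply functional_extensionality; intros; unfold vadd; ring.
  - intros eps Heps. destruct (Hcv (eps/2)) as [N1 HN1]; [lra|]. exists N1. intros k Hk.
    specialize (HN1 (k+N0)%nat ltac:(lia)). unfold R_dist in *.
    rewrite Rminus_0_r, Rabs_pos_eq in HN1 by (left; apply Hh).
    destruct (Hfacts k) as [_ [Hf2 _]]. pose proof (Hh (k+N0)%nat) as Hhk.
    replace (t0 + h (k+N0)%nat * zt (vk (k+N0)%nat) - t0) with (h (k+N0)%nat * zt (vk (k+N0)%nat)) by ring.
    rewrite Rabs_mult, (Rabs_pos_eq (h _)) by lra.
    assert (Rabs (zt (vk (k+N0)%nat)) < 2).
    { apply Rabs_def1; nra. }
    assert (0 <= Rabs (zt (vk (k+N0)%nat))) by apply Rabs_pos. nra.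
  - intros eps Heps.
    set (delta := Rmin 1 (eps*eps/(2*D+2))).
    assert (Hdl : delta > 0) by (unfold delta; apply Rmin_glb_lt; [lra| apply Rdiv_lt_0_compat; nra]).
    assert (Hd1 : delta <= 1) by apply Rmin_l.
    assert (Hd2 : delta * (2*D+2) <= eps*eps).
    { assert (delta <= eps*eps/(2*D+2)) by apply Rmin_r.
      apply Rmult_le_compat_r with (r := 2*D+2) in H; [|lra].
      unfold Rdiv in H. rewrite Rmult_assoc, Rinv_l in H by lra. lra. }
    destruct (Hcv delta Hdl) as [N1 HN1]. exists N1. intros k Hk.
    specialize (HN1 (k+N0)%nat ltac:(lia)). unfold R_dist in *.
    rewrite Rminus_0_r, Rabs_pos_eq in HN1 by (left; apply Hh).
    destruct (Hfacts k) as [_ [_ Hf3]]. pose proof (Hh (k+N0)%nat) as Hhk.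
    set (hk := h (k+N0)%nat) in *. set (v := vk (k+N0)%nat) in *.
    assert (Hhh : hk * hk * zdot v v < eps * eps).
    { assert (hk*hk*zdot v v <= hk * (2*D+2)).
      { assert (0 <= zdot v v) by apply zdot_nonneg.
        assert (hk * zdot v v <= zdot v v) by nra.
        rewrite Rmult_assoc. apply Rmult_le_compat_l; lra. }
      nra. }
    rewrite vec_eq1, vec_eq2. split; apply vnorm_lt; auto; rewrite vdot_scal_l, vdot_scal_r.
    + pose proof (zx_bound _ _ v). pose proof (vdot_nonneg _ (zx v)). nra.
    + pose proof (zy_bound _ _ v). pose proof (vdot_nonneg _ (zy v)). nra.
Qed.

Lemma FL_nonempty n m p (f : Vec n -> Vec m -> Vec n) (L : Vec n -> Vec m -> Vec p) U x u0 :
  U u0 -> FL f L U x (f x u0, L x u0).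
Proof.
  intros Hu. unfold FL, closure_pv. intros eps He. exists (f x u0, L x u0). split.
  - intros C _ HS. apply HS. exists u0; auto.
  - unfold pvnorm, pvdot, pvsub; simpl. rewrite !vdot_sub_self, Rplus_0_r, sqrt_0. lra.
Qed.

Theorem proposition8p2 (T : R) (n m p : nat)
  (U : Vec m -> Prop) (f : Vec n -> Vec m -> Vec n) (L : Vec n -> Vec m -> Vec p)
  (P : Vec p -> Prop) (W : SVMap n p) :
  T > 0 -> (1 <= n)%nat -> (1 <= m)%nat -> (1 <= p)%nat ->
  (exists u, U u) -> compact_set U ->
  MOC_regular U f -> MOC_regular U L ->
  ordering_cone P ->
  gen_contingent_solution T U f L P W ->
  gen_proximal_solution T U f L P W.
Proof.
  intros HT _ _ _ [u0 Hu0] _ _ _ [_ [Hadd _]] [Hext [Hi [Hii HTz]]].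
  split; [exact Hext|]. split; [|split; [|split]].
  - intros t x y Ht Hy w xi v Hcod. unfold coderiv in Hcod. split.
    + intros fv Lv HFL.
      pose proof (Hii t x y ltac:(lra) Hy fv Lv HFL) as Hc. unfold Defs.cont_deriv in Hc.
      pose proof (key _ _ _ _ _ _ Hcod Hc) as K. unfold zdot, zt, zx, zy in K; simpl in K.
      rewrite vdot_opp_r, vdot_opp_l in K. lra.
    + intros b Hb. destruct (Hi t x y ltac:(lra) Hy) as [fb [Lb [HFL Hc]]].
      pose proof (key _ _ _ _ _ _ Hcod Hc) as K. unfold zdot, zt, zx, zy in K; simpl in K.
      rewrite vdot_opp_r, vdot_opp_l in K. specialize (Hb fb Lb HFL). lra.
  - intros x y [w [q [HW [Hq E]]]]. subst y.
    destruct (Hi 0 x w ltac:(lra) HW) as [fb [Lb [_ Hc]]].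
    unfold Defs.cont_deriv in Hc.
    apply (limsup_gen n p T P W 0 x w q (1, fb, vopp Lb) (fun t => 0 < t <= T)); auto.
    + unfold zt; simpl; ring.
    + unfold zt; simpl; intros tau Htau Hpos; lra.
  - intros x y [w [q [HW [Hq E]]]]. subst y.
    pose proof (Hii T x w ltac:(lra) HW _ _ (FL_nonempty _ _ _ f L U x u0 Hu0)) as Hc.
    unfold Defs.cont_deriv in Hc.
    apply (limsup_gen n p T P W T x w q (-1, vopp (f x u0), L x u0) (fun t => 0 <= t < T)); auto.
    + unfold zt; simpl; ring.
    + unfold zt; simpl; intros tau Htau Hpos; lra.
  - exact HTz.
Qed.
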